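(* Let $P$ be a poset on $[n]=\{1,\dots,n\}$ whose labeling is natural (the identity permutation $e$ is a linear extension), and let $x_1,\dots,x_n$ be strictly positive reals. Let $M$ be the transition matrix of the promotion graph of $P$. Define, for $\pi\in\mathcal{L}(P)$, $$w(\pi)=\prod_{i=1}^{n}\frac{x_1+\cdots+x_i}{x_{\pi_1}+\cdots+x_{\pi_i}}.$$ Then $w$ is the stationary state of the promotion graph Markov chain normalized by $w(e)=1$, i.e. $\sum_{\pi\in\mathcal{L}(P)}M(\pi',\pi)\,w(\pi)=0$ for every $\pi'\in\mathcal{L}(P)$.
   Context: Linear extensions: $\mathcal{L}(P)=\{\pi\in S_n : i\prec j \text{ in } P \Rightarrow \pi^{-1}_i<\pi^{-1}_j\}$, written in one-line notation $\pi=\pi_1\cdots\pi_n$ (so $i\prec j$ means $i$ appears before $j$). For $1\le i<n$, the operator $\tau_i$ acts on the right on $\mathcal{L}(P)$: $\pi\tau_i$ is obtained from $\pi$ by swapping $\pi_i$ and $\pi_{i+1}$ if they are incomparable in $P$, and $\pi\tau_i=\pi$ otherwise. Operators compose as right actions: $\pi(\sigma\tau)=(\pi\sigma)\tau$. The extended promotion operators are $\partial_j=\tau_j\tau_{j+1}\cdots\tau_{n-1}$ for $1\le j\le n$ ($\partial_n$ is the identity). Promotion graph: vertex set $\mathcal{L}(P)$, and for each $\pi\in\mathcal{L}(P)$ and $j\in[n]$ a directed edge $\pi\to\pi\partial_j$ of weight $x_{\pi_j}$. Transition matrix $M$ (rows and columns indexed by $\mathcal{L}(P)$): for $\pi'\neq\pi$,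 $M(\pi',\pi)$ is the sum of the weights of edges $\pi\to\pi'$; $M(\pi,\pi)$ is minus the sum of weights of all edges $\pi\to\pi'$ with $\pi'\ne\pi$ (loops are not counted). *)

(* Defs.v *)
(* Conventions: elements and positions are 0-indexed,
   i.e. [n] = {1..n} is rendered as 'I_n = {0..n-1}. *)
From HB Require Import structures.
From mathcomp Require Import all_boot all_order all_algebra all_fingroup.
Set Implicit Arguments. Unset Strict Implicit. Unset Printing Implicit Defensive.
Import GRing.Theory Num.Theory.
Local Open Scope ring_scope.

Definition is_poset (n : nat) (le : rel 'I_n) : Prop :=
  [/\ reflexive le, antisymmetric le & transitive le].

Definition prec (n : nat) (le : rel 'I_n) (i j : 'I_n) : bool := (i != j) && le i j.

Definition comparable (n : nat) (le : rel 'I_n) (i j : 'I_n) : bool := le i j || le j i.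

(* One-line notation: pi : 'S_n, pi k = the element in position k;
   (pi^-1) i = position of element i. *)
Definition is_linext (n : nat) (le : rel 'I_n) (pi : 'S_n) : bool :=
  [forall i, forall j, prec le i j ==> ((pi^-1)%g i < (pi^-1)%g j)%N].

Definition natural_labeling (n : nat) (le : rel 'I_n) : bool := is_linext le 1%g.

(* tau_k (0-indexed position k, swaps positions k and k+1):
   (tperm a b * pi) x = pi (tperm a b x). *)
Definition tau (n : nat) (le : rel 'I_n) (k : nat) (pi : 'S_n) : 'S_n :=
  match (insub k : option 'I_n), (insub k.+1 : option 'I_n) with
  | Some a, Some b => if comparable le (pi a) (pi b) then pi else (tperm a b * pi)%g
  | _, _ => pi
  end.

(* extended promotion  pi d_j = pi tau_j tau_{j+1} ... tau_{n-2} (0-indexed),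
   right action: tau_j applied first. d_{n-1} is the identity. *)
Definition promo (n : nat) (le : rel 'I_n) (j : nat) (pi : 'S_n) : 'S_n :=
  foldl (fun p k => tau le k p) pi (iota j (n.-1 - j)).

Definition trans_mx (R : nzRingType) (n : nat) (le : rel 'I_n) (x : 'I_n -> R)
  (pi' pi : 'S_n) : R :=
  if pi' != pi then \sum_(j < n | promo le j pi == pi') x (pi j)
  else - \sum_(j < n | promo le j pi != pi) x (pi j).

Definition wt (R : fieldType) (n : nat) (x : 'I_n -> R) (pi : 'S_n) : R :=
  \prod_(i < n) ((\sum_(k < n | (k <= i)%N) x k) / (\sum_(k < n | (k <= i)%N) x (pi k))).

(* Main.v *)
Require Import Defs.
From HB Require Import structures.
From mathcomp Require Import all_boot all_order all_algebra all_fingroup.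
From mathcomp Require Import zify ring.
Import GRing.Theory Num.Theory.
Local Open Scope ring_scope.

Section Comb.
Variables (n : nat) (le : rel 'I_n).

Lemma tau_cases k (p : 'S_n) : tau le k p = p \/
  exists a b : 'I_n, [/\ val a = k, val b = k.+1,
     ~~ Defs.comparable le (p a) (p b) & tau le k p = (tperm a b * p)%g].
Proof.
rewrite /tau; case: (insubP 'I_n k) => [a _ va|_]; case: (insubP 'I_n k.+1) => [b _ vb|_] //=; try by left.
case: ifP => H; first by left.
by right; exists a, b; rewrite H.
Qed.

Lemma tau_inv k (p : 'S_n) : tau le k (tau le k p) = p.
Proof.
rewrite /tau; case: (insubP 'I_n k) => [a _ va|_]; case: (insubP 'I_n k.+1) => [b _ vb|_] //=.
case H: (Defs.comparable le (p a) (p b)); first by rewrite H.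
rewrite !permM tpermL tpermR /Defs.comparable orbC.
move: H; rewrite /Defs.comparable => ->.
by rewrite mulgA tperm2 mul1g.
Qed.

Lemma tperm_adj_lt (a b y z : 'I_n) k : val a = k -> val b = k.+1 ->
  (y < z)%N -> ~ (y = a /\ z = b) -> (tperm a b y < tperm a b z)%N.
Proof.
move=> va vb Hyz Hne.
have E : forall w : 'I_n, val (tperm a b w) =
   if val w == k then k.+1 else if val w == k.+1 then k else val w.
  move=> w; case: tpermP => [->|->|/eqP Ha /eqP Hb].
  - by rewrite va vb eqxx.
  - rewrite vb va eqxx (_ : (k.+1 == k) = false) //; lia.
  - rewrite -vb -va !(inj_eq val_inj) (negbTE Ha) (negbTE Hb) //.
have Hne' : ~ (val y = k /\ val z = k.+1).
  by move=> [H1 H2]; apply: Hne; split; apply: val_inj; rewrite ?H1 ?H2.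
rewrite E E.
case: (val y =P k) => H1; case: (val z =P k) => H2; case: (val y =P k.+1) => H3; case: (val z =P k.+1) => H4; move: H1 H2 H3 H4 Hyz Hne'; rewrite /=; lia.
Qed.

Lemma tau_linext k (p : 'S_n) : is_linext le p -> is_linext le (tau le k p).
Proof.
case: (tau_cases k p) => [->//|[a [b [va vb Hc ->]]]] Hp.
apply/forallP => i; apply/forallP => j; apply/implyP => Hij.
have := forallP (forallP Hp i) j; rewrite Hij /= => Hlt.
rewrite invMg !permM.
rewrite tpermV; apply: (@tperm_adj_lt a b _ _ k va vb Hlt).
move=> [Hi Hj]; move: Hc; rewrite -Hi -Hj !permKV /Defs.comparable.
by move: Hij; rewrite /prec => /andP [_ ->].
Qed.

Definition rho j (s : 'S_n) := foldr (fun k p => tau le k p) s (iota j (n.-1 - j)).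

Lemma foldl_foldr_tau (l : seq nat) (p : 'S_n) :
  foldl (fun q k => tau le k q) (foldr (fun k q => tau le k q) p l) l = p.
Proof. by elim: l => //= a l IH; rewrite tau_inv. Qed.

Lemma foldr_foldl_tau (l : seq nat) (p : 'S_n) :
  foldr (fun k q => tau le k q) (foldl (fun q k => tau le k q) p l) l = p.
Proof. by elim: l p => //= a l IH p; rewrite IH tau_inv. Qed.

Lemma promo_rho j s : promo le j (rho j s) = s.
Proof. exact: foldl_foldr_tau. Qed.

Lemma rho_promo j s : rho j (promo le j s) = s.
Proof. exact: foldr_foldl_tau. Qed.

Lemma rho_linext j s : is_linext le s -> is_linext le (rho j s).
Proof.
rewrite /rho; elim: (iota _ _) => //= a l IH H.
by apply: tau_linext; apply: IH.
Qed.

End Comb.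

Section Pref.
Variables (R : realFieldType) (n : nat) (le : rel 'I_n) (x : 'I_n -> R).

Definition pref (p : 'S_n) (s : nat) : R := \sum_(m < n | (m < s)%N) x (p m).

Lemma pref_tau k p s : s != k.+1 -> pref (tau le k p) s = pref p s.
Proof.
move=> Hs.
case: (tau_cases _ le k p) => [->//|[a [b [va vb Hc ->]]]].
rewrite /pref (reindex_inj (@perm_inj _ (tperm a b))) /=.
apply: eq_big => m.
  have E : val (tperm a b m) =
   if val m == k then k.+1 else if val m == k.+1 then k else val m.
    case: tpermP => [->|->|/eqP Ha /eqP Hb].
    - by rewrite va vb eqxx.
    - rewrite vb va eqxx (_ : (k.+1 == k) = false) //; lia.
    - by rewrite -vb -va !(inj_eq val_inj) (negbTE Ha) (negbTE Hb).
  move: E Hs => /=; case: (nat_of_ord m =P k); case: (nat_of_ord m =P k.+1); move=> H1 H2 E Hs; rewrite E;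
   apply/idP/idP; lia.
by rewrite permM tpermK.
Qed.

Lemma pref_foldr (l : seq nat) p s : all (fun k => s != k.+1) l ->
  pref (foldr (fun k q => tau le k q) p l) s = pref p s.
Proof.
elim: l => //= a l IH /andP [H1 H2].
by rewrite pref_tau // IH.
Qed.

Lemma pref_rho_lo j s p : (s <= j)%N -> pref (rho _ le j p) s = pref p s.
Proof.
move=> Hs; apply: pref_foldr; apply/allP => k; rewrite mem_iota => /andP [H1 H2].
apply/eqP; lia.
Qed.

Lemma pref_rho_hi j i p : (j <= i)%N -> (i < n)%N ->
  pref (rho _ le j p) i.+1 = pref (rho _ le i p) i.+1.
Proof.
move=> Hji Hin; rewrite /rho.
have -> : (n.-1 - j = (i - j) + (n.-1 - i))%N by lia.
rewrite iotaD foldr_cat (_ : (j + (i - j) = i)%N); last by lia.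
apply: pref_foldr; apply/allP => k; rewrite mem_iota => /andP [H1 H2].
apply/eqP; lia.
Qed.

Lemma pref0 (p : 'S_n) : pref p 0 = 0.
Proof. by rewrite /pref big_pred0. Qed.

Lemma pref_succ (p : 'S_n) (j : 'I_n) : x (p j) = pref p j.+1 - pref p j.
Proof.
rewrite /pref (bigD1 j) //=.
rewrite (eq_bigl (fun m : 'I_n => (m < j)%N)); first by rewrite addrK.
move=> m /=; rewrite ltnS; apply/idP/idP.
- move/andP => [H1 H2]; rewrite ltn_neqAle H1 andbT.
  by move: H2; apply: contra => /eqP H; apply/eqP/val_inj.
- move=> H; rewrite ltnW //=; apply/eqP => E; move: H; rewrite E ltnn.
  done.
Qed.

Lemma pref_full (p : 'S_n) : pref p n = \sum_(m < n) x m.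
Proof.
rewrite /pref (eq_bigl predT) //; last by move=> m; rewrite ltn_ord.
by rewrite (reindex_inj (@perm_inj _ p^-1%g)) /=; apply: eq_bigr => m _; rewrite permKV.
Qed.

Hypothesis xpos : forall i, 0 < x i.

Lemma pref_pos (p : 'S_n) s : (0 < s)%N -> (s <= n)%N -> 0 < pref p s.
Proof.
move=> H1 H2; rewrite /pref.
rewrite (bigD1 (Ordinal (n:=n) (m:=0) ltac:(lia))) //=.
apply: ltr_pwDl; first by apply: xpos.
by apply: sumr_ge0 => m _; apply: Order.POrderTheory.ltW.
Qed.
End Pref.

Lemma telescope_w (R : fieldType) (m : nat) (u t : nat -> R) :
 (forall i, (i < m)%N -> u i.+1 != 0 /\ t i.+1 != 0) -> u 0%N = 0 ->
 \sum_(j < m) (t j.+1 - u j) / \prod_(i < m) (if (i < j)%N then u i.+1 else t i.+1)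
 = u m / \prod_(i < m) u i.+1.
Proof.
move=> Hnz Hu0.
set Q := fun j : nat => \prod_(i < m) (if (i < j)%N then u i.+1 else t i.+1).
have Qnz : forall j, Q j != 0.
  move=> j; apply/prodf_neq0 => i _; have [H1 H2] := Hnz i (ltn_ord i).
  by case: ifP.
have step : forall j, (j < m)%N -> (t j.+1 - u j) / Q j = u j.+1 / Q j.+1 - u j / Q j.
  move=> j Hj.
  have [Z [E1 E2]] : exists Z, Q j = t j.+1 * Z /\ Q j.+1 = u j.+1 * Z.
    exists (\prod_(i < m | i != Ordinal Hj) (if (i < j)%N then u i.+1 else t i.+1)).
    rewrite /Q (bigD1 (Ordinal Hj)) //= ltnn; split => //.
    rewrite (bigD1 (Ordinal Hj)) //= ltnSn; congr (_ * _).
    apply: eq_bigr => i Hi; rewrite ltnS leq_eqVlt.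
    have -> : (nat_of_ord i == j) = false.
      by apply/negbTE; move: Hi; apply: contra => /eqP H; apply/eqP/val_inj.
    done.
  have [H1 H2] := Hnz j Hj.
  have HZ : Z != 0 by move: (Qnz j); rewrite E1 mulf_eq0 negb_or => /andP [].
  rewrite E2 E1.
  by field; rewrite HZ H1 H2.
rewrite -(big_mkord xpredT (fun j => (t j.+1 - u j) / Q j)).
rewrite (@telescope_sumr_eq _ 0 m (fun j => u j / Q j)).
2: by []. 2: by move=> k /andP [_ Hk]; apply: step.
rewrite Hu0 mul0r subr0; congr (_ / _).
by apply: eq_bigr => i _; rewrite ltn_ord.
Qed.

Arguments pref {R n}.
Lemma wt_eq (R : realFieldType) (n : nat) (x : 'I_n -> R) (p : 'S_n) :
  wt x p = (\prod_(i < n) pref x 1%g i.+1) / \prod_(i < n) pref x p i.+1.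
Proof.
rewrite /wt prodf_div; congr (_ / _); apply: eq_bigr => i _; rewrite /pref.
  by apply: eq_big => [k|k _]; rewrite ?ltnS ?perm1.
Qed.

Theorem theorem4p5 (R : realFieldType) (n : nat) (le : rel 'I_n) (x : 'I_n -> R) :
  is_poset le -> natural_labeling le -> (forall i, 0 < x i) ->
  wt x 1%g = 1 /\
  (forall pi' : 'S_n, is_linext le pi' ->
     \sum_(pi : 'S_n | is_linext le pi) trans_mx le x pi' pi * wt x pi = 0).
Proof.
move=> _ _ xpos.
have prefnz : forall (p : 'S_n) (i : 'I_n), pref x p i.+1 != 0.
  by move=> p i; rewrite lt0r_neq0 // (pref_pos _ _ _ xpos).
split.
  rewrite wt_eq divff //; apply/prodf_neq0 => i _; exact: prefnz.
move=> s Hs.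
have TA : forall pi : 'S_n, trans_mx le x s pi =
   \sum_(j < n | promo le j pi == s) x (pi j) - (pi == s)%:R * \sum_(j < n) x (pi j).
  move=> pi; rewrite /trans_mx; case: eqVneq => [->|Hne] /=.
    by rewrite mul1r (bigID (fun j : 'I_n => promo le j pi == pi) predT) /= opprD addrA subrr sub0r.
  by rewrite mul0r subr0.
under eq_bigr => pi _ do rewrite TA mulrBl.
rewrite sumrB.
rewrite [X in _ - X](_ : _ = (\sum_(j < n) x (s j)) * wt x s); last first.
  rewrite (bigD1 s) //= eqxx mul1r [X in _ + X]big1 ?addr0 //.
  by move=> pi /andP [_ /negbTE ->]; rewrite mul0r mul0r.
under eq_bigr => pi _ do rewrite mulr_suml.
rewrite (exchange_big_dep predT) //=.
have Hr : forall j : 'I_n,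
  \sum_(pi : 'S_n | is_linext le pi && (promo le j pi == s)) x (pi j) * wt x pi
  = x (rho _ le j s j) * wt x (rho _ le j s).
  move=> j; apply: (big_pred1 (rho _ le j s)) => pi /=.
  apply/andP/eqP.
    by move=> [_ /eqP <-]; rewrite rho_promo.
  by move=> ->; rewrite promo_rho rho_linext // eqxx.
under eq_bigr => j _ do rewrite Hr.
apply/eqP; rewrite subr_eq0; apply/eqP.
set u := fun k => pref x s k.
set t := fun k => pref x (rho _ le k.-1 s) k.
set C := \prod_(i < n) pref x 1%g i.+1.
set Q := fun j : nat => \prod_(i < n) (if (i < j)%N then u i.+1 else t i.+1).
have E : forall j : 'I_n, x (rho _ le j s j) * wt x (rho _ le j s) = C * ((t j.+1 - u j) / Q j).
  move=> j; rewrite wt_eq -/C mulrCA mulrA [RHS]mulrA; congr (C * _ / _).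
    by rewrite pref_succ (@pref_rho_lo _ _ le x j j s).
  apply: eq_bigr => i _; rewrite /u /t /=.
  case: ltnP => Hij; first by rewrite pref_rho_lo.
  by rewrite pref_rho_hi.
under eq_bigr => j _ do rewrite E.
rewrite -mulr_sumr telescope_w; last first.
- by rewrite /u pref0.
- by move=> i Hi; split; [exact: (prefnz s (Ordinal Hi)) | exact: (prefnz _ (Ordinal Hi))].
rewrite wt_eq -/C /u.
have -> : pref x s n = \sum_(j < n) x (s j).
  by rewrite /pref; apply: eq_bigl => m; rewrite ltn_ord.
by rewrite mulrCA mulrA.
Qed.
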